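(* Let $N_E$ be the number of edges of the random intersection graph $\mathcal G(n,m,p)$, $n,m\ge3$, $p\in(0,1)$, and $\hat p=1-(1-p^2)^m$. Then $$\operatorname{Var}[N_E]=\binom n2\hat p(1-\hat p)+6\binom n3\Big[(1-2p^2+p^3)^m-(1-\hat p)^2\Big],$$ and $$\operatorname{Var}[N_E]\asymp n^2\hat p(1-\hat p)+n^3(1-2p^2+p^3)^m\big[1\wedge(mp^3)\big].$$ In particular, if $mp^3\le1$, then $\operatorname{Var}[N_E]\asymp n^2\hat p(1-\hat p)+n^3mp^3(1-\hat p)^2$.
   Context: Random intersection graph $\mathcal G(n,m,p)$: vertex set $\{v_1,\ldots,v_n\}$, attribute set $\{a_1,\ldots,a_m\}$; each vertex chooses each attribute independently with probability $p$, and two vertices are adjacent iff they chose at least one common attribute. Notation: $a\asymp b$ means $a,b>0$ and $c\,b\le a\le C\,b$ for positive constants $c,C$ not depending on $n,m,p$. *)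

(* Defs.v *)
From HB Require Import structures.
From mathcomp Require Import all_boot all_order all_algebra.
From mathcomp Require Import reals.
Set Implicit Arguments.
Unset Strict Implicit.
Unset Printing Implicit Defensive.
Import Order.TTheory GRing.Theory Num.Theory.
Local Open Scope ring_scope.

(* Random intersection graph G(n,m,p) as a finite probability space.
   An outcome w records, for each (vertex v_i, attribute a_k), whether
   v_i chose a_k.  Choices are independent Bernoulli(p). *)
Definition rig_outcome (n m : nat) := {ffun 'I_n * 'I_m -> bool}.

Definition rig_prob (R : realType) (n m : nat) (p : R) (w : rig_outcome n m) : R :=
  \prod_(x : 'I_n * 'I_m) (if w x then p else 1 - p).

Definition rig_adj (n m : nat) (w : rig_outcome n m) (i j : 'I_n) : bool :=
  (i != j) && [exists k : 'I_m, w (i, k) && w (j, k)].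

Definition num_edges (n m : nat) (w : rig_outcome n m) : nat :=
  #|[set e : 'I_n * 'I_n | (e.1 < e.2)%N && rig_adj w e.1 e.2]|.

Definition rig_expect (R : realType) (n m : nat) (p : R)
  (X : rig_outcome n m -> R) : R :=
  \sum_(w : rig_outcome n m) rig_prob p w * X w.

Definition rig_var (R : realType) (n m : nat) (p : R)
  (X : rig_outcome n m -> R) : R :=
  rig_expect p (fun w => (X w - rig_expect p X) ^+ 2).

Definition NE (R : realType) (n m : nat) (w : rig_outcome n m) : R :=
  (num_edges w)%:R.

Definition phat (R : realType) (m : nat) (p : R) : R := 1 - (1 - p ^+ 2) ^+ m.

Definition asymp_by (R : realType) (c C a b : R) : Prop :=
  0 < a /\ 0 < b /\ c * b <= a /\ a <= C * b.

(* Main.v *)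
Require Import Defs.
From HB Require Import structures.
From mathcomp Require Import all_boot all_order all_algebra.
From mathcomp Require Import reals.
From mathcomp Require Import ring lra zify.
Import Order.TTheory GRing.Theory Num.Theory.
Local Open Scope ring_scope.

Definition wt (R : realType) (p : R) (b : bool) : R := if b then p else 1 - p.
Arguments wt {R}.

Lemma L1 (R : realType) (p : R) (I : finType) (F : I -> bool -> R) :
  \sum_(v : {ffun I -> bool}) \prod_x (wt p (v x) * F x (v x))
  = \prod_x (p * F x true + (1 - p) * F x false).
Proof.
rewrite -(bigA_distr_bigA (fun x b => wt p b * F x b)).
by apply: eq_bigr => x _; rewrite big_bool.
Qed.

Definition col (n m : nat) (w : rig_outcome n m) (k : 'I_m) : {ffun 'I_n -> bool} :=
  [ffun i => w (i, k)].
Arguments col {n m}.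

Definition Ec (R : realType) (p : R) (n : nat) (f : {ffun 'I_n -> bool} -> R) : R :=
  \sum_(v : {ffun 'I_n -> bool}) (\prod_i wt p (v i)) * f v.
Arguments Ec {R} p {n}.

Lemma col_expect (R : realType) (p : R) (n m : nat) (H : 'I_m -> {ffun 'I_n -> bool} -> R) :
  rig_expect p (fun w => \prod_k H k (col w k)) = \prod_k Ec p (H k).
Proof.
rewrite /Ec /rig_expect (bigA_distr_bigA (fun k (v : {ffun 'I_n -> bool}) => (\prod_i wt p (v i)) * H k v)).
pose h (w : rig_outcome n m) : {ffun 'I_m -> {ffun 'I_n -> bool}} := [ffun k => col w k].
pose g (W : {ffun 'I_m -> {ffun 'I_n -> bool}}) : rig_outcome n m := [ffun x => W x.2 x.1].
have hb : bijective h.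
  exists g => [w|W]; apply/ffunP.
    by case=> i k; rewrite !ffunE.
  by move=> k; apply/ffunP => i; rewrite !ffunE.
rewrite (reindex h) /=; last by apply: onW_bij.
apply: eq_bigr => w _.
rewrite big_split /= /rig_prob; congr (_ * _); last first.
  by apply: eq_bigr => k _; rewrite ffunE.
rewrite exchange_big pair_big /=; apply: eq_bigr => [[i k]] _.
by rewrite !ffunE.
Qed.

Lemma Ec_mono (R : realType) (p : R) (n : nat) (S : {set 'I_n}) :
  Ec p (fun v => ([forall x in S, v x] : bool)%:R) = p ^+ #|S|.
Proof.
have -> : p ^+ #|S| = \prod_x (p * (if x \in S then 1 else 1) + (1 - p) * (if x \in S then 0 else 1)).
  rewrite -prodr_const (big_mkcond (fun x => x \in S)) /=.
  by apply: eq_bigr => x _; case: (x \in S); rewrite ?mulr1 ?mulr0 ?addr0 //; ring.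
have -> : \prod_x (p * (if x \in S then 1 else 1) + (1 - p) * (if x \in S then 0 else 1))
   = \prod_x (p * (if x \in S then (true : bool)%:R else 1) + (1 - p) * (if x \in S then (false:bool)%:R else 1)) by [].
rewrite -(@L1 R p _ (fun x b => if x \in S then (b : bool)%:R else 1)) /Ec.
apply: eq_bigr => v _.
rewrite big_split /=; congr (_ * _).
case: (boolP [forall x in S, v x]) => [/forall_inP H|/forall_inPn [x xS vx]].
  by rewrite big1 // => x _; case: ifP => // /H ->.
by rewrite (bigD1 x) //= xS (negbTE vx) mul0r.
Qed.

Lemma EcD (R : realType) (p : R) (n : nat) (f g : {ffun 'I_n -> bool} -> R) :
  Ec p (fun v => f v + g v) = Ec p f + Ec p g.
Proof. by rewrite /Ec -big_split; apply: eq_bigr => v _; rewrite mulrDr. Qed.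

Lemma EcZ (R : realType) (p : R) (n : nat) (c : R) (f : {ffun 'I_n -> bool} -> R) :
  Ec p (fun v => c * f v) = c * Ec p f.
Proof. by rewrite /Ec mulr_sumr; apply: eq_bigr => v _; rewrite mulrCA. Qed.

Lemma Ec_ext (R : realType) (p : R) (n : nat) (f g : {ffun 'I_n -> bool} -> R) :
  (forall v, f v = g v) -> Ec p f = Ec p g.
Proof. by move=> fg; rewrite /Ec; apply: eq_bigr => v _; rewrite fg. Qed.

Lemma mono2 (n : nat) (v : {ffun 'I_n -> bool}) a b :
  (v a && v b) = [forall x in [set a; b], v x].
Proof.
apply/andP/forall_inP => [[va vb] x|H].
  by rewrite !inE => /orP [] /eqP ->.
by split; apply: H; rewrite !inE eqxx ?orbT.
Qed.

Lemma monoU (n : nat) (v : {ffun 'I_n -> bool}) (S T : {set 'I_n}) :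
  ([forall x in S, v x] && [forall x in T, v x]) = [forall x in S :|: T, v x].
Proof.
apply/andP/forall_inP => [[/forall_inP H1 /forall_inP H2] x|H].
  by rewrite inE => /orP [/H1|/H2].
by split; apply/forall_inP => x xS; apply: H; rewrite inE xS ?orbT.
Qed.

Lemma Ec_pair (R : realType) (p : R) (n : nat) (a b c d : 'I_n) :
  Ec p (fun v => (1 - (v a && v b)%:R) * (1 - (v c && v d)%:R))
  = 1 - p ^+ #|[set a; b]| - p ^+ #|[set c; d]| + p ^+ #|[set a; b] :|: [set c; d]|.
Proof.
rewrite (@Ec_ext R p n _ (fun v => ([forall x in set0, v x] : bool)%:R
   + ((-1) * ([forall x in [set a; b], v x] : bool)%:R
   + ((-1) * ([forall x in [set c; d], v x] : bool)%:R
   + ([forall x in [set a; b] :|: [set c; d], v x] : bool)%:R)))); last first.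
  move=> v; rewrite -!mono2 -monoU -!mono2.
  have -> : [forall x in set0, v x] = true by apply/forall_inP => x; rewrite inE.
  by case: (v a); case: (v b); case: (v c); case: (v d) => /=; ring.
rewrite !EcD !EcZ !Ec_mono cards0 expr0; ring.
Qed.

Lemma E_ext (R : realType) (p : R) (n m : nat) (X Y : rig_outcome n m -> R) :
  (forall w, X w = Y w) -> rig_expect p X = rig_expect p Y.
Proof. by move=> XY; rewrite /rig_expect; apply: eq_bigr => w _; rewrite XY. Qed.

Lemma E1 (R : realType) (p : R) (n m : nat) : rig_expect p (fun _ : rig_outcome n m => 1) = 1.
Proof.
rewrite /rig_expect /rig_prob.
transitivity (\prod_(x : 'I_n * 'I_m) (p * 1 + (1 - p) * 1)); last first.
  by rewrite big1 // => x _; ring.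
rewrite -(@L1 R p _ (fun _ _ => 1)); apply: eq_bigr => w _.
by rewrite mulr1; apply: eq_bigr => x _; rewrite mulr1.
Qed.

Lemma ED (R : realType) (p : R) (n m : nat) (X Y : rig_outcome n m -> R) :
  rig_expect p (fun w => X w + Y w) = rig_expect p X + rig_expect p Y.
Proof. by rewrite /rig_expect -big_split; apply: eq_bigr => w _; rewrite mulrDr. Qed.

Lemma EZ (R : realType) (p : R) (n m : nat) (c : R) (X : rig_outcome n m -> R) :
  rig_expect p (fun w => c * X w) = c * rig_expect p X.
Proof. by rewrite /rig_expect mulr_sumr; apply: eq_bigr => w _; rewrite mulrCA. Qed.

Lemma Esum (R : realType) (p : R) (n m : nat) (I : finType) (X : I -> rig_outcome n m -> R) :
  rig_expect p (fun w => \sum_i X i w) = \sum_i rig_expect p (X i).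
Proof.
rewrite /rig_expect exchange_big /=; apply: eq_bigr => w _; by rewrite mulr_sumr.
Qed.

Lemma Econst (R : realType) (p : R) (n m : nat) (c : R) :
  rig_expect p (fun _ : rig_outcome n m => c) = c.
Proof.
rewrite (@E_ext R p n m _ (fun w => c * 1)); last by move=> w; rewrite mulr1.
by rewrite EZ E1 mulr1.
Qed.

Lemma var_affine (R : realType) (p : R) (n m : nat) (a b : R) (X Y : rig_outcome n m -> R) :
  (forall w, X w = a * Y w + b) -> rig_var p X = a ^+ 2 * rig_var p Y.
Proof.
move=> XY; rewrite /rig_var.
have EX : rig_expect p X = a * rig_expect p Y + b.
  by rewrite (@E_ext R p n m _ _ XY) ED EZ Econst.
rewrite -EZ; apply: (@E_ext R p n m) => w; rewrite XY EX; ring.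
Qed.

Lemma var_formula (R : realType) (p : R) (n m : nat) (X : rig_outcome n m -> R) :
  rig_var p X = rig_expect p (fun w => X w * X w) - rig_expect p X * rig_expect p X.
Proof.
rewrite /rig_var.
set mu := rig_expect p X.
rewrite (@E_ext R p n m _ (fun w => X w * X w + ((-2 * mu) * X w + mu ^+ 2))); last by move=> w; ring.
rewrite !ED EZ Econst -/mu; ring.
Qed.

Lemma var_sum (R : realType) (p : R) (n m : nat) (I : finType) (c : I -> R)
   (Y : I -> rig_outcome n m -> R) :
  rig_var p (fun w => \sum_i c i * Y i w)
  = \sum_i \sum_j c i * c j * (rig_expect p (fun w => Y i w * Y j w)
                               - rig_expect p (Y i) * rig_expect p (Y j)).
Proof.
rewrite var_formula.
rewrite (@E_ext R p n m _ (fun w => \sum_i \sum_j (c i * c j) * (Y i w * Y j w))); last first.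
  move=> w; rewrite mulr_suml; apply: eq_bigr => i _; rewrite mulr_sumr.
  by apply: eq_bigr => j _; ring.
rewrite Esum Esum mulr_suml -sumrB; apply: eq_bigr => i _.
rewrite Esum mulr_sumr -sumrB; apply: eq_bigr => j _.
rewrite EZ !EZ; ring.
Qed.

Definition Z (R : realType) (n m : nat) (a b : 'I_n) (w : rig_outcome n m) : R :=
  \prod_k (1 - (w (a, k) && w (b, k))%:R).
Arguments Z {R n m}.

Lemma EZZ (R : realType) (p : R) (n m : nat) (a b c d : 'I_n) :
  rig_expect p (fun w : rig_outcome n m => (Z a b w : R) * Z c d w)
  = (1 - p ^+ #|[set a; b]| - p ^+ #|[set c; d]| + p ^+ #|[set a; b] :|: [set c; d]|) ^+ m.
Proof.
rewrite (@E_ext R p n m _ (fun w => \prod_k (fun k (v : {ffun 'I_n -> bool}) =>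
   (1 - (v a && v b)%:R) * (1 - (v c && v d)%:R)) k (col w k))); last first.
  by move=> w; rewrite /Z -big_split; apply: eq_bigr => k _; rewrite /col !ffunE.
rewrite (@col_expect R p n m (fun k (v : {ffun 'I_n -> bool}) =>
   (1 - (v a && v b)%:R) * (1 - (v c && v d)%:R))).
by rewrite (eq_bigr _ (fun k _ => @Ec_pair R p n a b c d)) prodr_const card_ord.
Qed.

Lemma EZ1 (R : realType) (p : R) (n m : nat) (a b : 'I_n) :
  rig_expect p (fun w : rig_outcome n m => (Z a b w : R))
  = (1 - p ^+ #|[set a; b]|) ^+ m.
Proof.
rewrite (@E_ext R p n m _ (fun w => (Z a b w : R) * Z a b w)); last first.
  move=> w; rewrite /Z -big_split; apply: eq_bigr => k _ /=.
  by case: (w (a,k) && w (b,k)); rewrite /= ?subrr ?subr0 ?mulr0 ?mulr1.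
rewrite EZZ setUid; congr (_ ^+ _); ring.
Qed.

Lemma Zsym (R : realType) (n m : nat) (a b : 'I_n) (w : rig_outcome n m) :
  (Z a b w : R) = Z b a w.
Proof. by apply: eq_bigr => k _; rewrite andbC. Qed.

Lemma Zind (R : realType) (n m : nat) (a b : 'I_n) (w : rig_outcome n m) :
  (Z a b w : R) = (~~ [exists k, w (a, k) && w (b, k)])%:R.
Proof.
case: (boolP [exists k, w (a, k) && w (b, k)]) => [/existsP [k H]|/existsPn H].
  by rewrite /Z (bigD1 k) //= H subrr mul0r.
by rewrite /Z big1 // => k _; rewrite (negbTE (H k)) subr0.
Qed.

Lemma NE_step1 (R : realType) (n m : nat) (w : rig_outcome n m) :
  NE R w = \sum_(a : 'I_n) \sum_(b : 'I_n) (((a < b)%N)%:R - ((a < b)%N)%:R * Z a b w).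
Proof.
rewrite pair_big /= /NE /num_edges -sumr_const (big_mkcond (fun e => e \in _)) /=.
apply: eq_bigr => [[a b]] _ /=; rewrite inE /= /rig_adj Zind.
case: (ltnP a b) => ab /=.
  have -> : (a != b) by rewrite -val_eqE /= neq_ltn ab.
  by case: [exists k, _] => /=; ring.
by rewrite /=; ring.
Qed.

Lemma NE_step2 (R : realType) (n m : nat) (w : rig_outcome n m) :
  \sum_(a : 'I_n) \sum_(b : 'I_n) (((a < b)%N)%:R * Z a b w)
  = 2^-1 * \sum_(a : 'I_n) \sum_(b : 'I_n) ((a != b)%:R * (Z a b w : R)).
Proof.
have -> : \sum_(a : 'I_n) \sum_(b : 'I_n) ((a != b)%:R * (Z a b w : R))
   = \sum_(a : 'I_n) \sum_(b : 'I_n) (((a < b)%N)%:R * Z a b w) + \sum_(a : 'I_n) \sum_(b : 'I_n) (((b < a)%N)%:R * Z a b w).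
  rewrite -big_split; apply: eq_bigr => a _; rewrite -big_split; apply: eq_bigr => b _ /=.
  rewrite -mulrDl -val_eqE /=; case: (ltngtP a b) => //= _; by rewrite ?add0r ?addr0.
have -> : \sum_(a : 'I_n) \sum_(b : 'I_n) (((b < a)%N)%:R * (Z a b w : R)) = \sum_(a : 'I_n) \sum_(b : 'I_n) (((a < b)%N)%:R * Z a b w).
  rewrite exchange_big; apply: eq_bigr => a _; apply: eq_bigr => b _; by rewrite Zsym.
set s := \sum_(a : _) _. by field.
Qed.

Lemma split2 (R : realType) (n : nat) (F : 'I_n -> R) (a b : 'I_n) : a != b ->
  \sum_d F d = F a + F b + \sum_(d in ~: [set a; b]) F d.
Proof.
move=> ab; rewrite (bigD1 a) //= (bigD1 b) /=; last by rewrite eq_sym.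
rewrite addrA; congr (_ + _); apply: eq_bigl => d; rewrite !inE negb_or andbC.
by case: (d != a).
Qed.

Arguments split2 {R n} F {a b}.

Lemma cardC2 (n : nat) (a b : 'I_n) : a != b -> #|~: [set a; b]| = (n - 2)%N.
Proof. move=> ab; have := cardsC [set a; b]; rewrite cards2 ab card_ord; lia. Qed.

Lemma card_U (n : nat) (a b c d : 'I_n) : a != b ->
  #|[set a; b] :|: [set c; d]| = ((d \notin c |: [set a; b]) + ((c \notin [set a; b]) + 2))%N.
Proof.
move=> ab.
have -> : [set a; b] :|: [set c; d] = d |: (c |: [set a; b]).
  apply/setP => x; rewrite !inE.
  by case: (x == a); case: (x == b); case: (x == c); case: (x == d).
by rewrite cardsU1 cardsU1 cards2 ab.
Qed.

Definition Gf (R : realType) (p : R) (m k : nat) : R :=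
  (1 - 2 * p ^+ 2 + p ^+ k) ^+ m - ((1 - p ^+ 2) ^+ m) ^+ 2.
Arguments Gf {R}.

Lemma Gf4 (R : realType) (p : R) (m : nat) : Gf p m 4 = 0.
Proof.
rewrite /Gf -exprM mulnC exprM.
have -> : 1 - 2 * p ^+ 2 + p ^+ 4 = (1 - p ^+ 2) ^+ 2 by ring.
by rewrite subrr.
Qed.

Lemma inC2 (n : nat) (a b x : 'I_n) : x \in ~: [set a; b] -> (x != a) && (x != b).
Proof. by rewrite !inE negb_or. Qed.

Lemma sum_rest (R : realType) (n : nat) (a b : 'I_n) (K : R) : a != b ->
  \sum_(d in ~: [set a; b]) K = (n - 2)%N%:R * K.
Proof. by move=> ab; rewrite sumr_const cardC2 // mulr_natl. Qed.

Lemma Hab (R : realType) (p : R) (n m : nat) (a b c : 'I_n) : a != b ->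
  c \in [set a; b] ->
  \sum_d (c != d)%:R * Gf p m #|[set a; b] :|: [set c; d]|
  = Gf p m 2 + (n - 2)%N%:R * Gf p m 3.
Proof.
move=> ab cab.
have ba : b != a by rewrite eq_sym.
rewrite (split2 _ ab) (@eq_bigr _ _ _ _ _ _ _ (fun _ => Gf p m 3)); last first.
  move=> d /inC2 /andP [da db]; move: cab; rewrite !inE => /orP [] /eqP ->;
  by rewrite card_U // !inE (negbTE da) (negbTE db) ?eqxx ?orbT /= eq_sym ?da ?db mul1r.
rewrite sum_rest //; congr (_ + _).
rewrite !card_U // !inE !eqxx /= ?orbT.
move: cab; rewrite !inE => /orP [] /eqP -> /=; rewrite ?eqxx ?orbT /= ?(negbTE ab) ?(negbTE ba) /=; ring.
Qed.

Lemma Hcc (R : realType) (p : R) (n m : nat) (a b c : 'I_n) : a != b ->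
  c \in ~: [set a; b] ->
  \sum_d (c != d)%:R * Gf p m #|[set a; b] :|: [set c; d]| = 2 * Gf p m 3.
Proof.
move=> ab /inC2 /andP [ca cb].
rewrite (split2 _ ab) big1; last first.
  move=> d /inC2 /andP [da db]; case: (eqVneq c d) => [->|cd]; first by rewrite mul0r.
  rewrite card_U // !inE (negbTE da) (negbTE db) eq_sym (negbTE cd) (negbTE ca) (negbTE cb) /=.
  by rewrite Gf4 mulr0.
rewrite !card_U // !inE !eqxx ?orbT /= ca cb /= (negbTE ca) (negbTE cb) /=.
rewrite !mul1r addr0; ring.
Qed.

Lemma count_inner (R : realType) (p : R) (n m : nat) (a b : 'I_n) : a != b ->
  \sum_c \sum_d (c != d)%:R * Gf p m #|[set a; b] :|: [set c; d]|
  = 2 * Gf p m 2 + 4 * (n - 2)%N%:R * Gf p m 3.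
Proof.
move=> ab.
rewrite (split2 _ ab) !Hab ?inE ?eqxx ?orbT //.
rewrite (@eq_bigr _ _ _ _ _ _ _ (fun _ => 2 * Gf p m 3)); last by move=> c /(@Hcc R p n m a b c ab).
rewrite sum_rest //; ring.
Qed.

Lemma var_ext (R : realType) (p : R) (n m : nat) (X Y : rig_outcome n m -> R) :
  (forall w, X w = Y w) -> rig_var p X = rig_var p Y.
Proof.
move=> XY; rewrite (@var_affine R p n m 1 0 X Y); first by rewrite expr1n mul1r.
by move=> w; rewrite XY mul1r addr0.
Qed.

Lemma cov_ZZ (R : realType) (p : R) (n m : nat) (a b c d : 'I_n) : a != b -> c != d ->
  rig_expect p (fun w : rig_outcome n m => (Z a b w : R) * Z c d w)
  - rig_expect p (fun w : rig_outcome n m => (Z a b w : R))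
    * rig_expect p (fun w : rig_outcome n m => (Z c d w : R))
  = Gf p m #|[set a; b] :|: [set c; d]|.
Proof.
move=> ab cd; rewrite EZZ !EZ1 !cards2 ab cd /Gf.
have -> : 1 - p ^+ 2 - p ^+ 2 + p ^+ #|[set a; b] :|: [set c; d]|
  = 1 - 2 * p ^+ 2 + p ^+ #|[set a; b] :|: [set c; d]| by ring.
ring.
Qed.

Lemma varS2 (R : realType) (p : R) (n m : nat) :
  rig_var p (fun w : rig_outcome n m => \sum_(a : 'I_n) \sum_(b : 'I_n) ((a != b)%:R * (Z a b w : R)))
  = \sum_(a : 'I_n) \sum_(b : 'I_n) ((a != b)%:R *
       \sum_(c : 'I_n) \sum_(d : 'I_n) ((c != d)%:R * Gf p m #|[set a; b] :|: [set c; d]|)).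
Proof.
rewrite (@var_ext R p n m _ (fun w => \sum_(e : 'I_n * 'I_n) (e.1 != e.2)%:R * (Z e.1 e.2 w : R))); last first.
  by move=> w; rewrite pair_big.
rewrite (@var_sum R p n m _ (fun e => (e.1 != e.2)%:R) (fun e w => Z e.1 e.2 w)).
rewrite [RHS]pair_big; apply: eq_bigr => [[a b]] _ /=.
rewrite pair_big mulr_sumr; apply: eq_bigr => [[c d]] _ /=.
case: (eqVneq a b) => [->|ab]; first by rewrite /= !mulr0n !mul0r.
case: (eqVneq c d) => [->|cd]; first by rewrite /=; ring.
by rewrite /= !mulr1n !mul1r cov_ZZ.
Qed.

Lemma sum_neq (R : realType) (n : nat) (K : R) :
  \sum_(a : 'I_n) \sum_(b : 'I_n) ((a != b)%:R * K) = (n * n.-1)%N%:R * K.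
Proof.
rewrite (@eq_bigr _ _ _ _ _ _ _ (fun _ => n.-1%:R * K)); last first.
  move=> a _; rewrite (bigD1 a) //= eqxx mul0r add0r.
  rewrite (@eq_bigr _ _ _ _ _ _ _ (fun _ => K)); last by move=> b ba; rewrite eq_sym ba mul1r.
  rewrite (eq_bigl (fun b => b \in [set~ a])); last by move=> b; rewrite in_setC1.
  by rewrite sumr_const cardsC1 card_ord mulr_natl.
by rewrite sumr_const card_ord natrM -mulrA [RHS]mulr_natl.
Qed.

Lemma bin2' (n : nat) : ('C(n, 2) * 2 = n * n.-1)%N.
Proof. have := mul_bin_diag n 1; rewrite bin1. lia. Qed.

Lemma bin3' (n : nat) : ('C(n, 3) * 6 = n * n.-1 * (n - 2))%N.
Proof.
have h1 := mul_bin_diag n 2; have h2 := mul_bin_diag n.-1 1.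
rewrite bin1 in h2.
have -> : (n - 2 = n.-1.-1)%N by lia.
nia.
Qed.

Lemma part1 (R : realType) (n m : nat) (p : R) :
  rig_var p (@NE R n m) =
       'C(n, 2)%:R * phat m p * (1 - phat m p)
       + 6 * 'C(n, 3)%:R * ((1 - 2 * p ^+ 2 + p ^+ 3) ^+ m - (1 - phat m p) ^+ 2).
Proof.
set K := \sum_(a : 'I_n) \sum_(b : 'I_n) (((a < b)%N)%:R : R).
rewrite (@var_affine R p n m (- 2^-1) K (@NE R n m)
   (fun w => \sum_(a : 'I_n) \sum_(b : 'I_n) ((a != b)%:R * (Z a b w : R)))); last first.
  move=> w; rewrite NE_step1.
  have -> : \sum_(a : 'I_n) \sum_(b : 'I_n) ((((a < b)%N)%:R : R) - ((a < b)%N)%:R * Z a b w)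
     = K - \sum_(a : 'I_n) \sum_(b : 'I_n) (((a < b)%N)%:R * Z a b w).
    by rewrite /K -sumrB; apply: eq_bigr => a _; rewrite sumrB.
  rewrite NE_step2; ring.
rewrite varS2.
rewrite (@eq_bigr _ _ _ _ _ _ _ (fun a => \sum_(b : 'I_n) ((a != b)%:R *
     (2 * Gf p m 2 + 4 * (n - 2)%N%:R * Gf p m 3)))); last first.
  move=> a _; apply: eq_bigr => b _.
  case: (eqVneq a b) => [->|ab]; first by rewrite /= !mul0r.
  by rewrite count_inner.
rewrite sum_neq.
have e2 : ((n * n.-1)%N%:R : R) = 2 * 'C(n, 2)%:R by rewrite -bin2' natrM mulrC.
have e3 : 6 * 'C(n, 3)%:R = 2 * 'C(n, 2)%:R * (n - 2)%N%:R :> R.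
  by rewrite -e2 -!natrM -bin3' mulnC.
rewrite e2 e3 /Gf /phat.
have -> : 1 - 2 * p ^+ 2 + p ^+ 2 = 1 - p ^+ 2 by ring.
set s := (1 - p ^+ 2) ^+ m; set t := (1 - 2 * p ^+ 2 + p ^+ 3) ^+ m.
by field.
Qed.

Lemma bern (R : realType) (x : R) (k : nat) : -1 <= x -> 1 + k%:R * x <= (1 + x) ^+ k.
Proof.
move=> hx; elim: k => [|k IH]; first by rewrite mul0r addr0 expr0.
rewrite exprS -natr1.
have h1 : 0 <= 1 + x by lra.
have h2 : 0 <= ((1 + x) ^+ k - (1 + k%:R * x)) * (1 + x) by apply: mulr_ge0; lra.
have h3 : 0 <= k%:R * (x * x) by apply: mulr_ge0; [apply: ler0n | nra].
nra.
Qed.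

Lemma ux_facts (R : realType) (p : R) : 0 < p < 1 ->
  exists x : R, [/\ (1 - p ^+ 2) ^+ 2 = (1 - 2 * p ^+ 2 + p ^+ 3) * (1 - x),
     0 <= x, x <= p ^+ 3, 4 / 5 * p ^+ 3 <= x & 0 < 1 - 2 * p ^+ 2 + p ^+ 3].
Proof.
case/andP => p0 p1.
set d := 1 + p - p ^+ 2.
have d1 : 1 <= d by rewrite /d; nra.
have d54 : d <= 5 / 4 by rewrite /d; have := sqr_ge0 (p - 2^-1); nra.
have d0 : 0 < d by lra.
have p30 : 0 < p ^+ 3 by apply: exprn_gt0.
exists (p ^+ 3 / d); split.
- by rewrite /d; field; rewrite -/d gt_eqF.
- by apply: divr_ge0; lra.
- by rewrite ler_pdivrMr //; nra.
- by rewrite ler_pdivlMr //; nra.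
- have -> : 1 - 2 * p ^+ 2 + p ^+ 3 = (1 - p) * d by rewrite /d; ring.
  by apply: mulr_gt0; lra.
Qed.

Lemma binR (R : realType) (n : nat) : (3 <= n)%N ->
  2 * ('C(n, 2)%:R : R) = n%:R * (n%:R - 1) /\
  6 * ('C(n, 3)%:R : R) = n%:R * (n%:R - 1) * (n%:R - 2).
Proof.
move=> hn.
have e1 : (n.-1)%:R = n%:R - 1 :> R by rewrite -subn1 natrB //; lia.
have e2 : (n - 2)%N%:R = n%:R - 2 :> R by rewrite natrB //; lia.
split.
  by rewrite -e1 -!natrM -bin2' mulnC.
by rewrite -e1 -e2 -!natrM -bin3' mulnC.
Qed.

Lemma Nb (R : realType) (N C2 C3 : R) : 3 <= N -> 2 * C2 = N * (N - 1) ->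
  C3 = N * (N - 1) * (N - 2) ->
  [/\ N ^+ 2 / 3 <= C2, C2 <= N ^+ 2, 2 / 9 * N ^+ 3 <= C3 & C3 <= N ^+ 3].
Proof.
move=> N3 c2 c3; split.
- nra.
- nra.
- have h : 0 <= N * ((N - 3) * (7 * N - 6)) by apply: mulr_ge0; [lra | apply: mulr_ge0; lra].
  rewrite c3; nra.
- rewrite c3; nra.
Qed.

Lemma um9 (R : realType) (x : R) (m : nat) : 0 <= x -> m%:R * x <= 1 -> (3 <= m)%N ->
  1 / 9 <= (1 - x) ^+ m.
Proof.
move=> x0 mx hm.
have mR : 3 <= (m%:R : R) by rewrite (ler_nat R 3 m).
have x3 : 3 * x <= m%:R * x by apply: ler_wpM2r.
have hk : m = (m %/ 2 + (m - m %/ 2))%N by lia.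
have k1 : 2 * ((m %/ 2)%N%:R : R) <= m%:R + 1.
  have : (2 * (m %/ 2) <= m + 1)%N by lia.
  by rewrite -(ler_nat R) natrD natrM.
have k2 : 2 * ((m - m %/ 2)%N%:R : R) <= m%:R + 1.
  have : (2 * (m - m %/ 2) <= m + 1)%N by lia.
  by rewrite -(ler_nat R) natrD natrM.
have k1x := ler_wpM2r x0 k1; have k2x := ler_wpM2r x0 k2.
rewrite hk exprD.
have b1 : 1 - (m %/ 2)%N%:R * x <= (1 - x) ^+ (m %/ 2).
  by have := @bern R (- x) (m %/ 2) ltac:(lra); rewrite mulrN.
have b2 : 1 - (m - m %/ 2)%N%:R * x <= (1 - x) ^+ (m - m %/ 2).
  by have := @bern R (- x) (m - m %/ 2) ltac:(lra); rewrite mulrN.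
have -> : 1 / 9 = (1 / 3) * (1 / 3) :> R by field.
apply: ler_pM; lra.
Qed.

Lemma combine (R : realType) (N C2 C3 A t M w : R) :
  N ^+ 2 / 3 <= C2 -> C2 <= N ^+ 2 -> 2 / 9 * N ^+ 3 <= C3 -> C3 <= N ^+ 3 ->
  0 < A -> 0 < t -> 0 <= M -> 3 <= N -> 0 <= w -> w <= 1 ->
  2 / 5 * M <= 1 - w -> 1 - w <= M ->
  let V := C2 * A + C3 * (t * (1 - w)) in
  let b := N ^+ 2 * A + N ^+ 3 * (t * M) in
  [/\ 0 < b, 4 / 45 * b <= V, V <= b &
     (1 / 9 <= w -> let b3 := N ^+ 2 * A + N ^+ 3 * (t * M) * w in b3 <= b <= 9 * b3)].
Proof.
move=> hC2l hC2u hC3l hC3u A0 t0 M0 N3 w0 w1 zl zu V b.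
have N20 : 0 <= N ^+ 2 by apply: exprn_ge0; lra.
have N30 : 0 <= N ^+ 3 by apply: exprn_ge0; lra.
have tM0 : 0 <= t * M by apply: mulr_ge0; lra.
have tz0 : 0 <= t * (1 - w) by apply: mulr_ge0; lra.
have tzM : t * (1 - w) <= t * M by apply: ler_wpM2l; lra.
have tzM' : 2 / 5 * (t * M) <= t * (1 - w) by rewrite mulrCA; apply: ler_wpM2l; lra.
have i1 : N ^+ 2 / 3 * A <= C2 * A by apply: ler_wpM2r; lra.
have i2 : C2 * A <= N ^+ 2 * A by apply: ler_wpM2r; lra.
have i3 : 2 / 9 * N ^+ 3 * (2 / 5 * (t * M)) <= C3 * (t * (1 - w)).
  apply: ler_pM => //; [apply: mulr_ge0; lra | apply: mulr_ge0; lra].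
have i4 : C3 * (t * (1 - w)) <= N ^+ 3 * (t * M) by apply: ler_pM => //; lra.
have NA : 0 < N ^+ 2 * A by apply: mulr_gt0; [apply: exprn_gt0; lra | done].
have NT : 0 <= N ^+ 3 * (t * M) by apply: mulr_ge0.
split; rewrite /V /b; try lra.
move=> w9.
have j1 : N ^+ 3 * (t * M) * w <= N ^+ 3 * (t * M) by rewrite ler_piMr.
have j2 : N ^+ 3 * (t * M) * (1 / 9) <= N ^+ 3 * (t * M) * w by apply: ler_wpM2l.
apply/andP; split; lra.
Qed.

Lemma key (R : realType) (n m : nat) (p : R) :
  (3 <= n)%N -> (3 <= m)%N -> 0 < p < 1 ->
  let s := (1 - p ^+ 2) ^+ m in let t := (1 - 2 * p ^+ 2 + p ^+ 3) ^+ m in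
  let M := Num.min 1 (m%:R * p ^+ 3) in
  let V := 'C(n, 2)%:R * (1 - s) * s + 6 * 'C(n, 3)%:R * (t - s ^+ 2) in
  let b := (n%:R) ^+ 2 * (1 - s) * s + (n%:R) ^+ 3 * t * M in
  [/\ 0 < b, 4 / 45 * b <= V, V <= b & (m%:R * p ^+ 3 <= 1 -> 
      let b3 := (n%:R) ^+ 2 * (1 - s) * s + (n%:R) ^+ 3 * m%:R * p ^+ 3 * s ^+ 2 in
      b3 <= b <= 9 * b3)].
Proof.
move=> hn hm hp s t M V b.
have [p0 p1] := andP hp.
have [x [hq x0 xp3 x45 q0]] := @ux_facts R p hp.
set u := 1 - x.
have p31 : p ^+ 3 < 1 by rewrite exprn_ilt1 //; lra.
have p30 : 0 < p ^+ 3 by apply: exprn_gt0.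
have u0 : 0 <= u by rewrite /u; lra.
have u1 : u <= 1 by rewrite /u; lra.
have s2 : s ^+ 2 = t * u ^+ m by rewrite /s /t exprAC hq exprMn.
have um0 : 0 <= u ^+ m by apply: exprn_ge0.
have um1 : u ^+ m <= 1 by apply: exprn_ile1.
have t0 : 0 < t by apply: exprn_gt0.
have mR : 3 <= (m%:R : R) by rewrite (ler_nat R 3 m).
have bern1 : 1 - m%:R * x <= u ^+ m.
  by have := @bern R (- x) m ltac:(lra); rewrite /u mulrN.
have bern2 : 1 + m%:R * x <= (1 + x) ^+ m by apply: bern; lra.
have prod1 : u ^+ m * (1 + x) ^+ m <= 1.
  rewrite -exprMn; apply: exprn_ile1; rewrite /u; nra.
have prod2 : u ^+ m * (1 + m%:R * x) <= 1.
  apply: le_trans prod1; apply: ler_wpM2l => //.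
set z := 1 - u ^+ m.
have M1 : M <= 1 by rewrite /M ge_min lexx.
have Mp : M <= m%:R * p ^+ 3 by rewrite /M ge_min lexx orbT.
have M0 : 0 <= M by rewrite /M le_min ler01 /=; apply: mulr_ge0; [apply: ler0n | lra].
have mx0 : 0 <= m%:R * x by apply: mulr_ge0; [apply: ler0n | lra].
have mxp : m%:R * x <= m%:R * p ^+ 3 by apply: ler_wpM2l => //; apply: ler0n.
have mxp' : 4 / 5 * (m%:R * p ^+ 3) <= m%:R * x.
  by rewrite mulrCA; apply: ler_wpM2l => //; apply: ler0n.
have zM : z <= M by rewrite /M le_min; apply/andP; split; rewrite /z; lra.
have zM' : 2 / 5 * M <= z.
  case: (lerP (m%:R * x) 1) => hy; rewrite /z; nra.
have p21 : 0 < 1 - p ^+ 2.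
  have : p ^+ 2 < 1 by rewrite exprn_ilt1 //; lra.
  lra.
have s0 : 0 < s by apply: exprn_gt0.
have p2 : 0 < p ^+ 2 by apply: exprn_gt0.
have s1 : s < 1.
  have m0 : (m != 0)%N by case: (m) hm.
  rewrite /s exprn_ilt1 ?m0 //; [exact: ltW | rewrite ltrBlDr ltrDl //].
set A := (1 - s) * s.
have A0 : 0 < A by rewrite /A; apply: mulr_gt0; [rewrite subr_gt0 |].
have [c2 c3] := @binR R n hn.
set N := (n%:R : R).
have N3 : 3 <= N by rewrite /N (ler_nat R 3 n).
set C2 := ('C(n, 2)%:R : R); set C3 := 6 * ('C(n, 3)%:R : R).
have [hC2l hC2u hC3l hC3u] := @Nb R N C2 C3 N3 c2 c3.
have zl : 2 / 5 * M <= 1 - u ^+ m by exact: zM'.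
have zu : 1 - u ^+ m <= M by exact: zM.
have [b0 lo up p3] := @combine R N C2 C3 A t M (u ^+ m) hC2l hC2u hC3l hC3u A0 t0 M0 N3 um0 um1 zl zu.
have eV : V = C2 * A + C3 * (t * (1 - u ^+ m)) by rewrite /V s2 /A /C3 /C2; ring.
have eb : b = N ^+ 2 * A + N ^+ 3 * (t * M) by rewrite /b /A; ring.
rewrite eV eb; split => //.
move=> hmp; cbv zeta.
have eM : M = m%:R * p ^+ 3 by rewrite /M min_r.
have x13 : m%:R * x <= 1 by lra.
have um9' := @um9 R x m x0 x13 hm.
have eb3 : N ^+ 2 * (1 - s) * s + N ^+ 3 * m%:R * p ^+ 3 * s ^+ 2
   = N ^+ 2 * A + N ^+ 3 * (t * M) * u ^+ m by rewrite eM s2 /A; ring.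
by rewrite eb3; apply: p3.
Qed.

Theorem lemma3p1 (R : realType) :
  (forall (n m : nat) (p : R), (3 <= n)%N -> (3 <= m)%N -> 0 < p < 1 ->
     rig_var p (@NE R n m) =
       'C(n, 2)%:R * phat m p * (1 - phat m p)
       + 6 * 'C(n, 3)%:R * ((1 - 2 * p ^+ 2 + p ^+ 3) ^+ m - (1 - phat m p) ^+ 2))
  /\ (exists c C : R, 0 < c /\ 0 < C /\
       forall (n m : nat) (p : R), (3 <= n)%N -> (3 <= m)%N -> 0 < p < 1 ->
         asymp_by c C (rig_var p (@NE R n m))
           ((n%:R) ^+ 2 * phat m p * (1 - phat m p)
            + (n%:R) ^+ 3 * (1 - 2 * p ^+ 2 + p ^+ 3) ^+ m
                * Num.min 1 (m%:R * p ^+ 3)))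
  /\ (exists c C : R, 0 < c /\ 0 < C /\
       forall (n m : nat) (p : R), (3 <= n)%N -> (3 <= m)%N -> 0 < p < 1 ->
         m%:R * p ^+ 3 <= 1 ->
         asymp_by c C (rig_var p (@NE R n m))
           ((n%:R) ^+ 2 * phat m p * (1 - phat m p)
            + (n%:R) ^+ 3 * m%:R * p ^+ 3 * (1 - phat m p) ^+ 2)).
Proof.
have e : forall y : R, 1 - (1 - y) = y by move=> y; ring.
split; first by move=> n m p _ _ _; exact: part1.
split.
  exists (4 / 45), 1; split; first lra; split; first lra.
  move=> n m p hn hm hp.
  rewrite part1 /asymp_by /phat !e.
  move: (@key R n m p hn hm hp); cbv zeta => -[b0 lo up _].
  split; [lra | split; [exact: b0 | split; lra]].
exists (4 / 45), 9; split; first lra; split; first lra.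
move=> n m p hn hm hp hmp.
rewrite part1 /asymp_by /phat !e.
move: (@key R n m p hn hm hp); cbv zeta => -[b0 lo up /(_ hmp) /andP [l3 u3]].
split; first lra; split; first lra; split; lra.
Qed.
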